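(* Let $A\in\mathbb{R}^{2\times2}$ be symmetric positive definite and $E=\{x\in\mathbb{R}^2:x^{\top}A^{-1}x=1\}$. For every $x_0\in E$ there exists a parallelogram $P$ inscribed in $E$ having $x_0$ as a vertex with \[ S(P)=4\sqrt{\det A}\,\sqrt{\operatorname{tr}(A^{-1})}=4\sqrt{\operatorname{tr}(A)}. \]
   Context: A centred parallelogram with linearly independent edge vectors $v_1,v_2$ is $P=\{t_1v_1+t_2v_2:|t_i|\le\tfrac12\}$ with vertices $\tfrac12(\pm v_1\pm v_2)$; it is inscribed in $E$ if all four vertices lie on $E$. Here $S(P)$ (the total measure of the facets, i.e. the edges) is the perimeter $2(\|v_1\|+\|v_2\|)$. *)

(* Defs.v *)
From mathcomp Require Import all_boot all_order all_algebra.
Set Implicit Arguments. Unset Strict Implicit. Unset Printing Implicit Defensive.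
Import Order.TTheory GRing.Theory Num.Theory.
Local Open Scope ring_scope.

Definition qform (R : rcfType) (M : 'M[R]_2) (x : 'cV[R]_2) : R :=
  (x^T *m M *m x) 0 0.

Definition spd (R : rcfType) (A : 'M[R]_2) : Prop :=
  A^T = A /\ forall x : 'cV[R]_2, x != 0 -> 0 < qform A x.

Definition ellipse (R : rcfType) (A : 'M[R]_2) (x : 'cV[R]_2) : Prop :=
  qform (invmx A) x = 1.

Definition enorm (R : rcfType) (v : 'cV[R]_2) : R :=
  Num.sqrt (\sum_(i < 2) v i 0 ^+ 2).

Definition lin_indep2 (R : rcfType) (v1 v2 : 'cV[R]_2) : Prop :=
  forall a b : R, a *: v1 + b *: v2 = 0 -> a = 0 /\ b = 0.

Definition pvertex (R : rcfType) (v1 v2 : 'cV[R]_2) (e1 e2 : bool) : 'cV[R]_2 :=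
  2^-1 *: ((-1) ^+ e1 *: v1 + (-1) ^+ e2 *: v2).

Definition inscribed (R : rcfType) (A : 'M[R]_2) (v1 v2 : 'cV[R]_2) : Prop :=
  forall e1 e2 : bool, ellipse A (pvertex v1 v2 e1 e2).

Definition perimeter (R : rcfType) (v1 v2 : 'cV[R]_2) : R :=
  2 * (enorm v1 + enorm v2).

(* Main.v *)
Require Import Defs.
Set Implicit Arguments. Unset Strict Implicit. Unset Printing Implicit Defensive.
From mathcomp Require Import all_boot all_order all_algebra ring lra.
Import Order.TTheory GRing.Theory Num.Theory.
Local Open Scope ring_scope.

Section S.
Variable R : rcfType.

Lemma sum2 (F : 'I_2 -> R) : \sum_(i < 2) F i = F 0 + F 1.
Proof. rewrite !big_ord_recl big_ord0 addr0; congr (_ + F _); exact: val_inj. Qed.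

Lemma lift00 : lift 0 0 = 1 :> 'I_2. Proof. exact/val_inj. Qed.
Lemma lift10 : lift 1 0 = 0 :> 'I_2. Proof. exact/val_inj. Qed.

Lemma det2 (A : 'M[R]_2) : \det A = A 0 0 * A 1 1 - A 0 1 * A 1 0.
Proof.
rewrite (expand_det_row _ 0) sum2 /cofactor !det_mx11 !mxE /= lift00 lift10.
rewrite expr0 expr1; ring.
Qed.

Lemma qformE (M : 'M[R]_2) v : qform M v =
  M 0 0 * v 0 0 ^+ 2 + (M 0 1 + M 1 0) * v 0 0 * v 1 0 + M 1 1 * v 1 0 ^+ 2.
Proof. rewrite /qform !mxE !sum2 !mxE !sum2 !mxE; ring. Qed.

Definition vec2 (a b : R) : 'cV[R]_2 := \col_(i < 2) (if i == 0 then a else b).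
Lemma vec2E0 a b : vec2 a b 0 0 = a. Proof. by rewrite mxE. Qed.
Lemma vec2E1 a b : vec2 a b 1 0 = b. Proof. by rewrite mxE. Qed.
Lemma vec2_eta (v : 'cV[R]_2) : v = vec2 (v 0 0) (v 1 0).
Proof.
apply/matrixP => i j; rewrite mxE ord1.
case: i => [[|[|//]]] Hi /=.
  by congr (v _ _); apply/val_inj.
by congr (v _ _); apply/val_inj.
Qed.

Lemma vec2_neq0 a b : (a != 0) || (b != 0) -> vec2 a b != 0.
Proof.
case/orP => h; apply/eqP => e.
  by move: h; rewrite -(vec2E0 a b) e mxE eqxx.
by move: h; rewrite -(vec2E1 a b) e mxE eqxx.
Qed.

Lemma invmx2 (A : 'M[R]_2) : \det A != 0 ->
  [/\ invmx A 0 0 = A 1 1 / \det A, invmx A 0 1 = - A 0 1 / \det A,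
      invmx A 1 0 = - A 1 0 / \det A & invmx A 1 1 = A 0 0 / \det A].
Proof.
move=> hd; rewrite /invmx unitmxE unitfE hd !mxE /cofactor !det_mx11 !mxE /=.
rewrite lift00 lift10 !expr0 !expr1 /=.
split; rewrite ?mulr1 ?mulN1r mulrC ?mul1r //.
by rewrite /= expr2 mulN1r opprK mul1r.
Qed.

Lemma pvertexE a b c d e1 e2 : pvertex (vec2 a b) (vec2 c d) e1 e2 =
  vec2 (2^-1 * ((-1) ^+ e1 * a + (-1) ^+ e2 * c)) (2^-1 * ((-1) ^+ e1 * b + (-1) ^+ e2 * d)).
Proof.
by rewrite [LHS]vec2_eta /pvertex !mxE /=.
Qed.

Lemma enorm2 a b : enorm (vec2 a b) = Num.sqrt (a ^+ 2 + b ^+ 2).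
Proof. by rewrite /enorm sum2 !mxE. Qed.

End S.

Section Sc0.
Variable R : rcfType.
Section Sc.
Variables p r s x y : R.
Definition DD := p * s - r ^+ 2.
Definition TT := p + s.
Definition n1 := s * x - r * y.
Definition n2 := p * y - r * x.
Definition b1 := r * n1 - p * n2.
Definition b2 := s * n1 - r * n2.
Definition KK := s * n1 ^+ 2 - 2 * r * n1 * n2 + p * n2 ^+ 2.
Definition mm := x ^+ 2 + y ^+ 2.
Definition gg := s * x ^+ 2 - 2 * r * x * y + p * y ^+ 2.
Definition hh := y * n1 - x * n2.

Lemma eK : KK = (TT^+2 - DD) * gg - TT * DD * mm.
Proof. rewrite /KK /TT /DD /gg /mm /n1 /n2; ring. Qed.
Lemma eB : b1 ^+ 2 + b2 ^+ 2 = (TT * TT ^+ 2 - 2 * TT * DD) * gg + (DD^+2 - TT^+2 * DD) * mm.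
Proof. rewrite /b1 /b2 /TT /DD /gg /mm /n1 /n2. ring. Qed.
Lemma eW : x * b1 + y * b2 = TT * hh.
Proof. rewrite /b1 /b2 /TT /hh /n1 /n2; ring. Qed.
Lemma eH : hh ^+ 2 = mm * (TT * gg - DD * mm) - gg ^+ 2.
Proof. rewrite /hh /TT /DD /gg /mm /n1 /n2; ring. Qed.
Lemma eBq : s * b1 ^+ 2 - 2 * r * b1 * b2 + p * b2 ^+ 2 = DD * KK.
Proof. rewrite /b1 /b2 /KK /DD /n1 /n2; ring. Qed.
Lemma eDet : x * b2 - y * b1 = n1 ^+ 2 + n2 ^+ 2.
Proof. rewrite /b1 /b2 /n1 /n2; ring. Qed.

Lemma key (E : gg = DD) :
  TT * (KK * mm + (b1 ^+ 2 + b2 ^+ 2)) - TT ^+ 2 * KK = (x * b1 + y * b2) ^+ 2.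
Proof.
rewrite eW eK eB exprMn eH E; ring.
Qed.
End Sc.
End Sc0.

Section T. Variable R : rcfType.
Lemma nbound (p r s u v : R) : 0 < p -> 0 < s -> 0 < DD p r s ->
  gg p r s u v = DD p r s -> mm u v <= TT p s.
Proof.
rewrite /DD /gg /mm /TT => hp hs hD E.
have e : (s^+2 + r^+2) * ((p + s) * (s * u ^+ 2 - 2 * r * u * v + p * v ^+ 2) - (p * s - r^+2) * (u^+2 + v^+2))
   = ((s^+2 + r^+2) * u - (p+s) * r * v) ^+ 2 + (p * s - r^+2)^+2 * v^+2 by ring.
have h1 : 0 <= (p + s) * (s * u ^+ 2 - 2 * r * u * v + p * v ^+ 2) - (p * s - r^+2) * (u^+2 + v^+2).
  have hs2 : 0 < s^+2 + r^+2 by rewrite ltr_pwDl ?sqr_ge0 // exprn_gt0.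
  rewrite -(pmulr_rge0 _ hs2) e; apply: addr_ge0; rewrite ?sqr_ge0 // mulr_ge0 ?sqr_ge0 //.
rewrite E in h1.
have h2 : 0 <= (p * s - r^+2) * ((p + s) - (u^+2 + v^+2)) by rewrite mulrBr; lra.
by rewrite pmulr_rge0 // subr_ge0 in h2.
Qed.
Lemma Kpos (p r s x y : R) : 0 < p -> 0 < s -> 0 < DD p r s ->
  gg p r s x y = DD p r s -> 0 < KK p r s x y.
Proof.
rewrite /DD /gg /KK => hp hs hD E.
set a := n1 r s x y; set b := n2 p r x y.
have hab : (a != 0) || (b != 0).
  rewrite -negb_and; apply/negP => /andP [/eqP ha /eqP hb].
  move: ha hb; rewrite /a /b /n1 /n2 => ha hb.
  have hx : (p*s - r^+2)*x = p*(s*x - r*y) + r*(p*y - r*x) by ring.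
  rewrite ha hb !mulr0 addr0 in hx.
  have hy : (p*s - r^+2)*y = r*(s*x - r*y) + s*(p*y - r*x) by ring.
  rewrite ha hb !mulr0 addr0 in hy.
  move/eqP: hx; rewrite mulf_eq0 gt_eqF //= => /eqP hx.
  move/eqP: hy; rewrite mulf_eq0 gt_eqF //= => /eqP hy.
  by move: E; rewrite hx hy; lra.
have hK : s * (s * a^+2 - 2 * r * a * b + p * b^+2) = (s * a - r * b)^+2 + (p * s - r^+2) * b^+2 by ring.
have sq0 : forall z : R, z != 0 -> 0 < z ^+ 2.
  by move=> z hz; rewrite lt_neqAle sqr_ge0 andbT eq_sym sqrf_eq0.
have hsK : 0 < s * (s * a^+2 - 2 * r * a * b + p * b^+2).
  rewrite hK; case: (eqVneq b 0) => hb.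
    move: hab; rewrite hb eqxx orbF => ha.
    rewrite mulr0 subr0 expr0n /= mulr0 addr0; apply: sq0; by rewrite mulf_neq0 // gt_eqF.
  apply: ltr_wpDl; first exact: sqr_ge0.
  by apply: mulr_gt0 => //; apply: sq0.
by rewrite pmulr_rgt0 in hsK.
Qed.
End T.

Theorem corollary4p8 (R : rcfType) (A : 'M[R]_2) (hA : spd A)
    (x0 : 'cV[R]_2) (hx0 : ellipse A x0) :
  exists v1 v2 : 'cV[R]_2,
    [/\ lin_indep2 v1 v2, inscribed A v1 v2,
        (exists e1 e2 : bool, pvertex v1 v2 e1 e2 = x0),
        perimeter v1 v2 = 4 * Num.sqrt (\det A) * Num.sqrt (\tr (invmx A))
      & 4 * Num.sqrt (\det A) * Num.sqrt (\tr (invmx A)) = 4 * Num.sqrt (\tr A)].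
Proof.
case: hA => hsym hpd.
have hr : A 1 0 = A 0 1 by rewrite -{1}hsym mxE.
set p := A 0 0 in hr *; set r := A 0 1 in hr *; set s := A 1 1 in hr *.
have hdet : \det A = DD p r s by rewrite det2 hr /DD /p /r /s expr2.
have hp : 0 < p.
  have := hpd (vec2 1 0) (vec2_neq0 (a:=1) (b:=0) (introT orP (or_introl (oner_neq0 R)))).
  by rewrite qformE !vec2E0 !vec2E1 -/p -/r -/s !expr2 ?mulr0 ?mul0r ?mulr1 ?addr0 ?add0r.
have hs : 0 < s.
  have := hpd (vec2 0 1) (vec2_neq0 (a:=0) (b:=1) (introT orP (or_intror (oner_neq0 R)))).
  by rewrite qformE !vec2E0 !vec2E1 -/p -/r -/s !expr2 ?mulr0 ?mul0r ?mulr1 ?addr0 ?add0r.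
have hD : 0 < DD p r s.
  have hn : (r != 0) || (- p != 0) by rewrite oppr_eq0 (gt_eqF hp) orbT.
  have := hpd (vec2 r (- p)) (vec2_neq0 hn).
  rewrite qformE !vec2E0 !vec2E1 -/p -/r -/s hr => h.
  have e : p * (p * s - r ^+ 2) = p * r ^+ 2 + (r + r) * r * - p + s * (- p) ^+ 2 by ring.
  by rewrite /DD; rewrite -e pmulr_rgt0 in h.
have hdet0 : \det A != 0 by rewrite hdet gt_eqF.
have ellE : forall u v, ellipse A (vec2 u v) <-> gg p r s u v = DD p r s.
  move=> u v; case: (invmx2 hdet0) => i00 i01 i10 i11.
  rewrite /ellipse qformE i00 i01 i10 i11 !vec2E0 !vec2E1 -/p -/r -/s hr hdet /gg.
  have hD0 : DD p r s != 0 by rewrite gt_eqF.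
  set D := DD p r s in hD0 *.
  have -> : s / D * u ^+ 2 + (- r / D + - r / D) * u * v + p / D * v ^+ 2 = (s * u ^+ 2 - 2 * r * u * v + p * v ^+ 2) / D.
    by field.
  split => h; first by rewrite -[LHS](divfK hD0) h mul1r.
  by rewrite h divff.
have htr : \tr A = TT p s by rewrite /mxtrace sum2 /TT.
have hT : 0 < TT p s by rewrite /TT addr_gt0.
have hsq : Num.sqrt (\det A) * Num.sqrt (\tr (invmx A)) = Num.sqrt (TT p s).
  have htri : \tr (invmx A) = TT p s / DD p r s.
    case: (invmx2 hdet0) => i00 _ _ i11.
    by rewrite /mxtrace sum2 i00 i11 hdet /TT -/p -/s -mulrDl addrC.
  rewrite hdet htri -sqrtrM; last exact: ltW.
  by rewrite mulrC divfK // gt_eqF.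
set x := x0 0 0; set y := x0 1 0.
have hx : x0 = vec2 x y by apply: vec2_eta.
have E1 : gg p r s x y = DD p r s by apply/ellE; rewrite -hx.
have hK := Kpos hp hs hD E1.
set K := KK p r s x y in hK.
set l := (Num.sqrt K)^-1.
have hl2 : l ^+ 2 = K^-1 by rewrite exprVn sqr_sqrtr // ltW.
have hl0 : 0 < l by rewrite invr_gt0 sqrtr_gt0.
set c1 := b1 p r s x y; set c2 := b2 p r s x y.
have Eb : gg p r s (l * c1) (l * c2) = DD p r s.
  have -> : gg p r s (l * c1) (l * c2) = l ^+ 2 * (s * c1 ^+ 2 - 2 * r * c1 * c2 + p * c2 ^+ 2).
    by rewrite /gg; ring.
  rewrite eBq -/K hl2; field; by rewrite gt_eqF.
exists (vec2 (x + l * c1) (y + l * c2)), (vec2 (x - l * c1) (y - l * c2)); split.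
- move=> al be h.
  have h0 := congr1 (fun M : 'cV[R]_2 => M 0 0) h; have h1 := congr1 (fun M : 'cV[R]_2 => M 1 0) h.
  rewrite /= !mxE /= in h0 h1.
  have hdt : x * c2 - y * c1 != 0.
    rewrite /c1 /c2 eDet; apply/eqP => /eqP.
    rewrite paddr_eq0 ?sqr_ge0 // !sqrf_eq0 => /andP [/eqP e1 /eqP e2].
    move: hK; rewrite /K /KK e1 e2; rewrite !expr0n /= !mulr0 !subrr addr0; by rewrite ltxx.
  have e1 : (al + be) * (x * c2 - y * c1) = c2 * (al * (x + l * c1) + be * (x - l * c1)) - c1 * (al * (y + l * c2) + be * (y - l * c2)) by ring.
  rewrite h0 h1 !mulr0 subr0 in e1.
  have e2 : ((al - be) * l) * (x * c2 - y * c1) = x * (al * (y + l * c2) + be * (y - l * c2)) - y * (al * (x + l * c1) + be * (x - l * c1)) by ring.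
  rewrite h0 h1 !mulr0 subr0 in e2.
  move/eqP: e1; rewrite mulf_eq0 (negbTE hdt) orbF => /eqP e1.
  move/eqP: e2; rewrite mulf_eq0 (negbTE hdt) orbF mulf_eq0 (gt_eqF hl0) orbF => /eqP e2.
  split; lra.
- have t2 : (2 : R) != 0 by rewrite pnatr_eq0.
  case; case; rewrite pvertexE /= ellE; [rewrite -E1|rewrite -Eb|rewrite -Eb|rewrite -E1];
    rewrite /gg; field; by [] || (rewrite ?t2 //).
- exists false; exists false.
  rewrite pvertexE hx /=; congr (vec2 _ _).
  1,2: by field; rewrite ?pnatr_eq0.
- rewrite /perimeter !enorm2 -mulrA hsq.
  set T := TT p s in hT *. set q := Num.sqrt T.
  have hq : q ^+ 2 = T by rewrite sqr_sqrtr // ltW.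
  have hq0 : 0 < q by rewrite sqrtr_gt0.
  set W := x * c1 + y * c2.
  have core : mm x y + l ^+ 2 * (c1 ^+ 2 + c2 ^+ 2) = T + l ^+ 2 * W ^+ 2 / T.
    rewrite /W /c1 /c2 -(key E1) hl2 -/K /T.
    field; rewrite ?(gt_eqF hK) ?(gt_eqF hT) //.
  have bnd : (l * W) ^+ 2 <= T ^+ 2.
    have na := nbound hp hs hD E1; have nb := nbound hp hs hD Eb.
    have cs : (l*W)^+2 + (x * (l*c2) - y * (l*c1))^+2 = mm x y * mm (l*c1) (l*c2) by rewrite /mm /W; ring.
    have hh := sqr_ge0 (x * (l*c2) - y * (l*c1)).
    have m0 : 0 <= mm x y by rewrite /mm addr_ge0 ?sqr_ge0.
    have m1 : 0 <= mm (l*c1) (l*c2) by rewrite /mm addr_ge0 ?sqr_ge0.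
    have := ler_pM m0 m1 na nb.
    rewrite -/T expr2; lra.
  have hpos1 : 0 <= T + l * W by nra.
  have hpos2 : 0 <= T - l * W by nra.
  have e1 : Num.sqrt ((x + l*c1)^+2 + (y + l*c2)^+2) = (T + l*W)/q.
    rewrite -[X in _ = X]ger0_norm; last by rewrite divr_ge0 // ltW.
    rewrite -sqrtr_sqr; congr Num.sqrt; rewrite expr_div_n hq.
    transitivity (mm x y + l^+2*(c1^+2+c2^+2) + 2 * (l * W)); first by rewrite /mm /W; ring.
    rewrite core; field; rewrite ?(gt_eqF hT) //.
  have e2 : Num.sqrt ((x - l*c1)^+2 + (y - l*c2)^+2) = (T - l*W)/q.
    rewrite -[X in _ = X]ger0_norm; last by rewrite divr_ge0 // ltW.
    rewrite -sqrtr_sqr; congr Num.sqrt; rewrite expr_div_n hq.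
    transitivity (mm x y + l^+2*(c1^+2+c2^+2) - 2 * (l * W)); first by rewrite /mm /W; ring.
    rewrite core; field; rewrite ?(gt_eqF hT) //.
  rewrite e1 e2 -hq; field; rewrite ?(gt_eqF hq0) //.
- by rewrite -mulrA hsq htr.
Qed.
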